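(* Let $012345$ be a convex hexagon with area $A$. For $i=0,\dots,5$ (indices mod $6$), let $(i)$ denote the area of the vertex triangle with vertices $i-1,i,i+1$, and let $p$ be the area of the triangle $013$. Then $$\begin{aligned} &[p-(1)]A^2\\ &+\big[(1)(4)+2(1)(2)+(1)(5)-p^2+(1)p+(0)(1)-(2)p-(3)p-(5)p-(4)p-(0)(2)-(0)p\big]A\\ &-(1)(2)(5)-(1)(2)p-(1)(2)(4)-(1)(4)(5)-(1)(2)^2+(2)(3)p+(3)p^2-(0)(1)(5)\\ &+(0)(2)^2+(4)(5)p-(0)(1)(2)+(0)(2)(5)+(0)p^2-(0)(1)p+2(0)(2)p+(0)(5)p+(3)(4)p=0. \end{aligned}$$
   Context: The vertices of the hexagon are labelled $0,\dots,5$ in cyclic order. *)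

(* Defs.v *)
From mathcomp Require Import all_boot all_order all_algebra.
Set Implicit Arguments. Unset Strict Implicit. Unset Printing Implicit Defensive.
Import Order.TTheory GRing.Theory Num.Theory.
Local Open Scope ring_scope.

Section Hex.
Variable R : realFieldType.
Notation pt := (R * R)%type.

(* twice the signed area of triangle a b c (positive iff counterclockwise) *)
Definition orient (a b c : pt) : R :=
  (b.1 - a.1) * (c.2 - a.2) - (b.2 - a.2) * (c.1 - a.1).

Definition tri_area (a b c : pt) : R := `|orient a b c| / 2.

Definition hv (P : 'I_6 -> pt) (k : nat) : pt := P (inord (k %% 6)).

(* strictly convex hexagon whose vertices P 0, ..., P 5 are in cyclic order
   (either orientation): every other vertex lies strictly on the same side
   of the line through each edge. *)
Definition convex_hexagon (P : 'I_6 -> pt) : Prop :=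
  (forall i j : nat, (i < 6)%N -> (j < 6)%N -> j != i -> j != (i.+1 %% 6)%N ->
     0 < orient (hv P i) (hv P i.+1) (hv P j)) \/
  (forall i j : nat, (i < 6)%N -> (j < 6)%N -> j != i -> j != (i.+1 %% 6)%N ->
     orient (hv P i) (hv P i.+1) (hv P j) < 0).

(* area of the hexagon (shoelace formula) *)
Definition hex_area (P : 'I_6 -> pt) : R :=
  `|\sum_(i < 6) ((hv P i).1 * (hv P i.+1).2 - (hv P i.+1).1 * (hv P i).2)| / 2.

Definition vtri (P : 'I_6 -> pt) (i : nat) : R :=
  tri_area (hv P (i + 5)) (hv P i) (hv P i.+1).

End Hex.

(* Main.v *)
Require Import Defs.
From mathcomp Require Import all_boot all_order all_algebra ring lra.
Import Order.TTheory GRing.Theory Num.Theory.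
Local Open Scope ring_scope.

Definition E {R : comNzRingType} (v0 v1 v2 v3 v4 v5 p A : R) : R :=
  (p - v1) * A ^+ 2
  + (v1 * v4 + 2 * v1 * v2 + v1 * v5 - p ^+ 2 + v1 * p
     + v0 * v1 - v2 * p - v3 * p - v5 * p - v4 * p
     - v0 * v2 - v0 * p) * A
  - v1 * v2 * v5 - v1 * v2 * p - v1 * v2 * v4
  - v1 * v4 * v5 - v1 * v2 ^+ 2 + v2 * v3 * p
  + v3 * p ^+ 2 - v0 * v1 * v5
  + v0 * v2 ^+ 2 + v4 * v5 * p - v0 * v1 * v2
  + v0 * v2 * v5 + v0 * p ^+ 2 - v0 * v1 * p
  + 2 * v0 * v2 * p + v0 * v5 * p + v3 * v4 * p.

Lemma E_opp (R : comNzRingType) (v0 v1 v2 v3 v4 v5 p A : R) :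
  E (-v0) (-v1) (-v2) (-v3) (-v4) (-v5) (-p) (-A) = - E v0 v1 v2 v3 v4 v5 p A.
Proof. rewrite /E; ring. Qed.

Lemma E_half (R : realFieldType) (v0 v1 v2 v3 v4 v5 p A : R) :
  E (v0/2) (v1/2) (v2/2) (v3/2) (v4/2) (v5/2) (p/2) (A/2) = E v0 v1 v2 v3 v4 v5 p A / 8.
Proof. by rewrite /E; field. Qed.

Lemma E_coords (R : realFieldType) (a0 a1 a2 a3 a4 a5 : R * R) :
  E (orient a5 a0 a1) (orient a0 a1 a2) (orient a1 a2 a3) (orient a2 a3 a4)
    (orient a3 a4 a5) (orient a4 a5 a0) (orient a0 a1 a3)
    ((a0.1 * a1.2 - a1.1 * a0.2) + (a1.1 * a2.2 - a2.1 * a1.2) + (a2.1 * a3.2 - a3.1 * a2.2)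
     + (a3.1 * a4.2 - a4.1 * a3.2) + (a4.1 * a5.2 - a5.1 * a4.2) + (a5.1 * a0.2 - a0.1 * a5.2)) = 0.
Proof.
case: a0 => x0 y0; case: a1 => x1 y1; case: a2 => x2 y2; case: a3 => x3 y3;
case: a4 => x4 y4; case: a5 => x5 y5. rewrite /E /orient /=. ring.
Qed.

Lemma fan (R : realFieldType) (a0 a1 a2 a3 a4 a5 : R * R) :
  (a0.1 * a1.2 - a1.1 * a0.2) + (a1.1 * a2.2 - a2.1 * a1.2) + (a2.1 * a3.2 - a3.1 * a2.2)
     + (a3.1 * a4.2 - a4.1 * a3.2) + (a4.1 * a5.2 - a5.1 * a4.2) + (a5.1 * a0.2 - a0.1 * a5.2)
  = orient a1 a2 a0 + orient a2 a3 a0 + orient a3 a4 a0 + orient a4 a5 a0.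
Proof.
case: a0 => x0 y0; case: a1 => x1 y1; case: a2 => x2 y2; case: a3 => x3 y3;
case: a4 => x4 y4; case: a5 => x5 y5. rewrite /orient /=. ring.
Qed.

Theorem theorem3 (R : realFieldType) (P : 'I_6 -> R * R) :
  convex_hexagon P ->
  let A := hex_area P in
  let v := vtri P in
  let p := tri_area (hv P 0) (hv P 1) (hv P 3) in
  (p - v 1%N) * A ^+ 2
  + (v 1%N * v 4%N + 2 * v 1%N * v 2%N + v 1%N * v 5%N - p ^+ 2 + v 1%N * p
     + v 0%N * v 1%N - v 2%N * p - v 3%N * p - v 5%N * p - v 4%N * p
     - v 0%N * v 2%N - v 0%N * p) * A
  - v 1%N * v 2%N * v 5%N - v 1%N * v 2%N * p - v 1%N * v 2%N * v 4%N
  - v 1%N * v 4%N * v 5%N - v 1%N * v 2%N ^+ 2 + v 2%N * v 3%N * p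
  + v 3%N * p ^+ 2 - v 0%N * v 1%N * v 5%N
  + v 0%N * v 2%N ^+ 2 + v 4%N * v 5%N * p - v 0%N * v 1%N * v 2%N
  + v 0%N * v 2%N * v 5%N + v 0%N * p ^+ 2 - v 0%N * v 1%N * p
  + 2 * v 0%N * v 2%N * p + v 0%N * v 5%N * p + v 3%N * v 4%N * p = 0.
Proof.
move=> Hc A v p.
suff : E (v 0%N) (v 1%N) (v 2%N) (v 3%N) (v 4%N) (v 5%N) p A = 0 by [].
rewrite /A /v /p.
set a0 := hv P 0; set a1 := hv P 1; set a2 := hv P 2; set a3 := hv P 3; set a4 := hv P 4; set a5 := hv P 5.
have eA : hex_area P = `|(a0.1 * a1.2 - a1.1 * a0.2) + (a1.1 * a2.2 - a2.1 * a1.2) + (a2.1 * a3.2 - a3.1 * a2.2)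
     + (a3.1 * a4.2 - a4.1 * a3.2) + (a4.1 * a5.2 - a5.1 * a4.2) + (a5.1 * a0.2 - a0.1 * a5.2)| / 2.
  by rewrite /hex_area !big_ord_recr big_ord0 /= add0r.
have ev0 : vtri P 0 = `|orient a5 a0 a1|/2 := erefl.
have ev1 : vtri P 1 = `|orient a0 a1 a2|/2 := erefl.
have ev2 : vtri P 2 = `|orient a1 a2 a3|/2 := erefl.
have ev3 : vtri P 3 = `|orient a2 a3 a4|/2 := erefl.
have ev4 : vtri P 4 = `|orient a3 a4 a5|/2 := erefl.
have ev5 : vtri P 5 = `|orient a4 a5 a0|/2 := erefl.
have ep : tri_area a0 a1 a3 = `|orient a0 a1 a3|/2 := erefl.
rewrite eA ev0 ev1 ev2 ev3 ev4 ev5 ep fan.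
case: Hc => H.
- have c0 : 0 < orient a5 a0 a1 := H 5%N 1%N erefl erefl erefl erefl.
  have c1 : 0 < orient a0 a1 a2 := H 0%N 2%N erefl erefl erefl erefl.
  have c2 : 0 < orient a1 a2 a3 := H 1%N 3%N erefl erefl erefl erefl.
  have c3 : 0 < orient a2 a3 a4 := H 2%N 4%N erefl erefl erefl erefl.
  have c4 : 0 < orient a3 a4 a5 := H 3%N 5%N erefl erefl erefl erefl.
  have c5 : 0 < orient a4 a5 a0 := H 4%N 0%N erefl erefl erefl erefl.
  have cp : 0 < orient a0 a1 a3 := H 0%N 3%N erefl erefl erefl erefl.
  have f1 : 0 < orient a1 a2 a0 := H 1%N 0%N erefl erefl erefl erefl.
  have f2 : 0 < orient a2 a3 a0 := H 2%N 0%N erefl erefl erefl erefl.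
  have f3 : 0 < orient a3 a4 a0 := H 3%N 0%N erefl erefl erefl erefl.
  have fs : 0 < orient a1 a2 a0 + orient a2 a3 a0 + orient a3 a4 a0 + orient a4 a5 a0.
    lra.
  rewrite !gtr0_norm // E_half -fan E_coords; exact: mul0r.
- have c0 : orient a5 a0 a1 < 0 := H 5%N 1%N erefl erefl erefl erefl.
  have c1 : orient a0 a1 a2 < 0 := H 0%N 2%N erefl erefl erefl erefl.
  have c2 : orient a1 a2 a3 < 0 := H 1%N 3%N erefl erefl erefl erefl.
  have c3 : orient a2 a3 a4 < 0 := H 2%N 4%N erefl erefl erefl erefl.
  have c4 : orient a3 a4 a5 < 0 := H 3%N 5%N erefl erefl erefl erefl.
  have c5 : orient a4 a5 a0 < 0 := H 4%N 0%N erefl erefl erefl erefl.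
  have cp : orient a0 a1 a3 < 0 := H 0%N 3%N erefl erefl erefl erefl.
  have f1 : orient a1 a2 a0 < 0 := H 1%N 0%N erefl erefl erefl erefl.
  have f2 : orient a2 a3 a0 < 0 := H 2%N 0%N erefl erefl erefl erefl.
  have f3 : orient a3 a4 a0 < 0 := H 3%N 0%N erefl erefl erefl erefl.
  have fs : orient a1 a2 a0 + orient a2 a3 a0 + orient a3 a4 a0 + orient a4 a5 a0 < 0.
    lra.
  rewrite !ltr0_norm // E_half E_opp -fan E_coords oppr0; exact: mul0r.
Qed.
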